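(* Let $m_A=0.307394561088771942$, $M_A=0.307396653842409774$, $m_B=0.451388989838190632$, $M_B=0.451676307610047724$. Let $(x_n)_{n\ge0}$ and $(s_n)_{n\ge0}$ be sequences of positive reals such that for every $n$: if $x_n\ge s_n$ (an ''A-burst'' at step $n$), then $x_{n+1}\in[m_Ax_n,M_Ax_n]$ and $s_{n+1}=s_n$; if $x_n<s_n$ (a ''B-burst'' at step $n$), then $s_{n+1}\in[m_Bs_n,M_Bs_n]$ and $x_{n+1}=x_n$. Let $r_n=x_n/s_n$. Then for all sufficiently large $n$, $r_n\in[m_A,1/m_B]$, and moreover (i) every maximal run of consecutive A-bursts eventually has length exactly $1$; (ii) every maximal run of consecutive B-bursts eventually has length at most $2$. Consequently, eventually every block of three consecutive steps contains at least one A-burst and at least one B-burst, and $x_n+s_n\to0$.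
   Context: This is the burst-ratio dynamics of AdaBoost on a product of two gadgets: $x_n$ and $s_n$ are the principal (dominant-eigendirection) coordinates of the two gadgets at the $n$th burst boundary, the A-gadget wins burst $n$ exactly when $x_n\ge s_n$ (ties to A), and a winning gadget's coordinate contracts by a factor in the stated interval while the other is unchanged. *)

(* Defs.v *)
From Stdlib Require Import Reals Lra.
Open Scope R_scope.

Definition mA : R := 0.307394561088771942.
Definition MA : R := 0.307396653842409774.
Definition mB : R := 0.451388989838190632.
Definition MB : R := 0.451676307610047724.

Definition A_burst (x s : nat -> R) (n : nat) : Prop := s n <= x n.
Definition B_burst (x s : nat -> R) (n : nat) : Prop := x n < s n.

Definition burst_dynamics (x s : nat -> R) : Prop :=
  (forall n, 0 < x n /\ 0 < s n) /\
  (forall n, A_burst x s n ->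
     mA * x n <= x (S n) <= MA * x n /\ s (S n) = s n) /\
  (forall n, B_burst x s n ->
     mB * s n <= s (S n) <= MB * s n /\ x (S n) = x n).

(* Main.v *)
Require Import Defs.
From Stdlib Require Import Reals.
From Stdlib Require Import Lra Lia Classical.
Open Scope R_scope.

Lemma consts : 0 < mA /\ mA <= MA /\ MA < mB /\ mB <= MB /\ MB < 1 /\ MB*MB <= mA.
Proof. unfold mA, MA, mB, MB; repeat split; lra. Qed.

Section S.
Variables x s : nat -> R.
Hypothesis H : burst_dynamics x s.

Definition Inv n := mA * s n <= x n /\ mB * x n <= s n.

Lemma pos n : 0 < x n /\ 0 < s n.
Proof. destruct H as [P _]; apply P. Qed.

Lemma stepA n : s n <= x n -> mA * x n <= x (S n) <= MA * x n /\ s (S n) = s n.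
Proof. destruct H as [_ [A _]]; apply A. Qed.

Lemma stepB n : x n < s n -> mB * s n <= s (S n) <= MB * s n /\ x (S n) = x n.
Proof. destruct H as [_ [_ B]]; apply B. Qed.

Lemma mono1 n : x (S n) <= x n /\ s (S n) <= s n.
Proof.
  destruct (consts) as (c1&c2&c3&c4&c5&c6). destruct (pos n) as [px ps].
  destruct (Rle_lt_dec (s n) (x n)) as [h|h].
  - destruct (stepA n h) as [[a b] c]. split; [nra|lra].
  - destruct (stepB n h) as [[a b] c]. split; [lra|nra].
Qed.

Lemma mono n k : x (n + k)%nat <= x n /\ s (n + k)%nat <= s n.
Proof.
  induction k. rewrite Nat.add_0_r; lra.
  replace (n + S k)%nat with (S (n + k)) by lia.
  destruct (mono1 (n + k)); lra.
Qed.

Lemma inv_step n : Inv n -> Inv (S n).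
Proof.
  unfold Inv; intros [h1 h2].
  destruct (consts) as (c1&c2&c3&c4&c5&c6). destruct (pos n) as [px ps].
  destruct (Rle_lt_dec (s n) (x n)) as [h|h].
  - destruct (stepA n h) as [[a b] c]. rewrite c. split; nra.
  - destruct (stepB n h) as [[a b] c]. rewrite c. split; nra.
Qed.

Lemma cross_AB n : s n <= x n -> x (S n) < s (S n) -> Inv (S n).
Proof.
  unfold Inv; intros h h'.
  destruct (consts) as (c1&c2&c3&c4&c5&c6). destruct (pos n) as [px ps].
  destruct (pos (S n)) as [px' ps'].
  destruct (stepA n h) as [[a b] c]. split; nra.
Qed.

Lemma cross_BA n : x n < s n -> s (S n) <= x (S n) -> Inv (S n).
Proof.
  unfold Inv; intros h h'.
  destruct (consts) as (c1&c2&c3&c4&c5&c6). destruct (pos n) as [px ps].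
  destruct (pos (S n)) as [px' ps'].
  destruct (stepB n h) as [[a b] c]. split; nra.
Qed.

Lemma not_all_A N : exists n, (N <= n)%nat /\ x n < s n.
Proof.
  destruct (consts) as (c1&c2&c3&c4&c5&c6).
  apply NNPP; intro C.
  assert (HA : forall n, (N <= n)%nat -> s n <= x n).
  { intros n hn. destruct (Rle_lt_dec (s n) (x n)); auto.
    exfalso; apply C; exists n; auto. }
  assert (K : forall k, x (N + k)%nat <= MA ^ k * x N /\ s (N + k)%nat = s N).
  { induction k. rewrite Nat.add_0_r; simpl; lra.
    replace (N + S k)%nat with (S (N + k)) by lia.
    destruct (stepA (N+k) (HA (N+k)%nat ltac:(lia))) as [[a b] c].
    destruct (pos (N+k)). simpl. split; [|lra].
    destruct IHk as [i1 i2].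
    apply Rmult_le_compat_l with (r := MA) in i1; [|lra]. lra. }
  destruct (pos N) as [px ps].
  destruct (pow_lt_1_zero MA ltac:(rewrite Rabs_right; lra) (s N / x N))
    as [k Hk].
  { apply Rdiv_lt_0_compat; auto. }
  specialize (Hk k (le_n _)). rewrite Rabs_right in Hk by (apply Rle_ge, pow_le; lra).
  destruct (K k) as [a b]. specialize (HA (N + k)%nat ltac:(lia)).
  rewrite b in HA.
  assert (MA ^ k * x N < s N).
  { apply (Rmult_lt_compat_r (x N)) in Hk; auto.
    unfold Rdiv in Hk. rewrite Rmult_assoc, Rinv_l in Hk; lra. }
  lra.
Qed.

Lemma not_all_B N : exists n, (N <= n)%nat /\ s n <= x n.
Proof.
  destruct (consts) as (c1&c2&c3&c4&c5&c6).
  apply NNPP; intro C.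
  assert (HB : forall n, (N <= n)%nat -> x n < s n).
  { intros n hn. destruct (Rle_lt_dec (s n) (x n)); auto.
    exfalso; apply C; exists n; auto. }
  assert (K : forall k, s (N + k)%nat <= MB ^ k * s N /\ x (N + k)%nat = x N).
  { induction k. rewrite Nat.add_0_r; simpl; lra.
    replace (N + S k)%nat with (S (N + k)) by lia.
    destruct (stepB (N+k) (HB (N+k)%nat ltac:(lia))) as [[a b] c].
    destruct (pos (N+k)). simpl. split; [|lra].
    destruct IHk as [i1 i2].
    apply Rmult_le_compat_l with (r := MB) in i1; [|lra]. lra. }
  destruct (pos N) as [px ps].
  destruct (pow_lt_1_zero MB ltac:(rewrite Rabs_right; lra) (x N / s N))
    as [k Hk].
  { apply Rdiv_lt_0_compat; auto. }
  specialize (Hk k (le_n _)). rewrite Rabs_right in Hk by (apply Rle_ge, pow_le; lra).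
  destruct (K k) as [a b]. specialize (HB (N + k)%nat ltac:(lia)).
  rewrite b in HB.
  assert (MB ^ k * s N < x N).
  { apply (Rmult_lt_compat_r (s N)) in Hk; auto.
    unfold Rdiv in Hk. rewrite Rmult_assoc, Rinv_l in Hk; lra. }
  lra.
Qed.

Lemma crossing : exists m, Inv m.
Proof.
  destruct (not_all_A 0) as [n0 [_ h0]].
  destruct (not_all_B n0) as [n1 [l h1]].
  assert (G : forall k n, x n < s n -> s (n + k)%nat <= x (n + k)%nat ->
            exists m, Inv m).
  { induction k; intros n a b.
    - rewrite Nat.add_0_r in b; lra.
    - destruct (Rle_lt_dec (s (S n)) (x (S n))) as [c|c].
      + exists (S n); apply cross_BA; auto.
      + apply (IHk (S n) c). replace (S n + k)%nat with (n + S k)%nat by lia; auto. }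
  apply (G (n1 - n0)%nat n0 h0). replace (n0 + (n1 - n0))%nat with n1 by lia; auto.
Qed.

Lemma inv_from : exists N, forall n, (N <= n)%nat -> Inv n.
Proof.
  destruct crossing as [m hm]. exists m.
  intros n hn. induction hn; auto. apply inv_step; auto.
Qed.

Lemma inv_i n : Inv n -> s n <= x n -> x (S n) < s (S n).
Proof.
  unfold Inv; intros [h1 h2] h.
  destruct (consts) as (c1&c2&c3&c4&c5&c6). destruct (pos n) as [px ps].
  destruct (stepA n h) as [[a b] c]. rewrite c. nra.
Qed.

Lemma inv_ii n : Inv n -> x n < s n -> x (S n) < s (S n) -> s (S (S n)) <= x (S (S n)).
Proof.
  unfold Inv; intros [h1 h2] h h'.
  destruct (consts) as (c1&c2&c3&c4&c5&c6). destruct (pos n) as [px ps].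
  destruct (pos (S n)) as [px' ps'].
  destruct (stepB n h) as [[a b] c]. destruct (stepB (S n) h') as [[a' b'] c'].
  rewrite c', c. nra.
Qed.

End S.

Theorem lemma6 (x s : nat -> R) :
  burst_dynamics x s ->
  (exists N, forall n, (N <= n)%nat -> mA <= x n / s n <= 1 / mB) /\
  (* (i) eventually no two consecutive A-bursts: maximal A-runs have length 1 *)
  (exists N, forall n, (N <= n)%nat ->
     A_burst x s n -> ~ A_burst x s (S n)) /\
  (* (ii) eventually no three consecutive B-bursts: maximal B-runs have length <= 2 *)
  (exists N, forall n, (N <= n)%nat ->
     B_burst x s n -> B_burst x s (S n) -> ~ B_burst x s (S (S n))) /\
  (* consequence: every window of 3 consecutive steps has an A- and a B-burst *)
  (exists N, forall n, (N <= n)%nat ->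
     (A_burst x s n \/ A_burst x s (S n) \/ A_burst x s (S (S n))) /\
     (B_burst x s n \/ B_burst x s (S n) \/ B_burst x s (S (S n)))) /\
  Un_cv (fun n => x n + s n) 0.
Proof.
  intro H.
  destruct (consts) as (c1&c2&c3&c4&c5&c6).
  destruct (inv_from x s H) as [N HN].
  assert (W : forall n, (N <= n)%nat ->
     (A_burst x s n \/ A_burst x s (S n) \/ A_burst x s (S (S n))) /\
     (B_burst x s n \/ B_burst x s (S n) \/ B_burst x s (S (S n)))).
  { intros n hn. unfold A_burst, B_burst.
    destruct (Rle_lt_dec (s n) (x n)) as [a|a].
    - split; [left; auto|]. right; left. apply (inv_i x s H n (HN n hn) a).
    - split; [|left; auto].
      destruct (Rle_lt_dec (s (S n)) (x (S n))) as [b|b]; [right; left; auto|].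
      right; right. apply (inv_ii x s H n (HN n hn) a b). }
  split; [|split; [|split; [|split]]].
  - exists N. intros n hn. destruct (HN n hn) as [h1 h2].
    destruct (pos x s H n) as [px ps].
    split.
    + apply (Rmult_le_reg_r (s n)); auto. unfold Rdiv.
      rewrite Rmult_assoc, Rinv_l; lra.
    + apply (Rmult_le_reg_r (s n * mB)). nra.
      unfold Rdiv.
      replace (x n * / s n * (s n * mB)) with (mB * x n) by (field; lra).
      replace (1 * / mB * (s n * mB)) with (s n) by (field; lra). lra.
  - exists N. intros n hn a b. unfold A_burst in *.
    pose proof (inv_i x s H n (HN n hn) a). lra.
  - exists N. intros n hn a b c. unfold B_burst in *.
    pose proof (inv_ii x s H n (HN n hn) a b). lra.
  - exists N; exact W.
  - set (u := fun n => x n + s n).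
    assert (U3 : forall n, (N <= n)%nat -> u (n + 3)%nat <= MB * u n).
    { intros n hn. unfold u.
      destruct (W n hn) as [A B]. unfold A_burst, B_burst in *.
      assert (hx : x (n + 3)%nat <= MA * x n).
      { destruct A as [a|[a|a]].
        - destruct (stepA x s H n a) as [[p q] r].
          destruct (mono x s H (S n) 2). replace (S n + 2)%nat with (n+3)%nat in * by lia. lra.
        - destruct (stepA x s H (S n) a) as [[p q] r].
          destruct (mono x s H (S (S n)) 1). destruct (mono1 x s H n).
          replace (S (S n) + 1)%nat with (n+3)%nat in * by lia.
          destruct (pos x s H n). nra.
        - destruct (stepA x s H (S (S n)) a) as [[p q] r].
          destruct (mono x s H n 2). replace (n + 2)%nat with (S (S n)) in * by lia.
          replace (n+3)%nat with (S (S (S n))) by lia.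
          destruct (pos x s H n). nra. }
      assert (hs : s (n + 3)%nat <= MB * s n).
      { destruct B as [a|[a|a]].
        - destruct (stepB x s H n a) as [[p q] r].
          destruct (mono x s H (S n) 2). replace (S n + 2)%nat with (n+3)%nat in * by lia. lra.
        - destruct (stepB x s H (S n) a) as [[p q] r].
          destruct (mono x s H (S (S n)) 1). destruct (mono1 x s H n).
          replace (S (S n) + 1)%nat with (n+3)%nat in * by lia.
          destruct (pos x s H n). nra.
        - destruct (stepB x s H (S (S n)) a) as [[p q] r].
          destruct (mono x s H n 2). replace (n + 2)%nat with (S (S n)) in * by lia.
          replace (n+3)%nat with (S (S (S n))) by lia.
          destruct (pos x s H n). nra. }
      destruct (pos x s H n). nra. }
    assert (UK : forall k, u (N + 3 * k)%nat <= MB ^ k * u N).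
    { induction k. rewrite Nat.add_0_r; simpl; lra.
      replace (N + 3 * S k)%nat with ((N + 3 * k) + 3)%nat by lia.
      pose proof (U3 (N + 3 * k)%nat ltac:(lia)). rewrite <- tech_pow_Rmult.
      apply Rmult_le_compat_l with (r := MB) in IHk; [|lra]. lra. }
    assert (upos : forall n, 0 < u n).
    { intro n; unfold u; destruct (pos x s H n); lra. }
    intros eps he.
    destruct (pow_lt_1_zero MB ltac:(rewrite Rabs_right; lra) (eps / u N)) as [K HK].
    { apply Rdiv_lt_0_compat; auto. }
    exists (N + 3 * K)%nat. intros n hn.
    specialize (HK K (le_n _)). rewrite Rabs_right in HK by (apply Rle_ge, pow_le; lra).
    unfold R_dist. rewrite Rminus_0_r. fold (u n).
    rewrite Rabs_right by (apply Rle_ge; left; auto).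
    destruct (mono x s H (N + 3 * K)%nat (n - (N + 3 * K))) as [m1 m2].
    replace (N + 3 * K + (n - (N + 3 * K)))%nat with n in * by lia.
    assert (u n <= u (N + 3 * K)%nat) by (unfold u; lra).
    pose proof (UK K).
    assert (MB ^ K * u N < eps).
    { apply (Rmult_lt_compat_r (u N)) in HK; auto.
      unfold Rdiv in HK. rewrite Rmult_assoc, Rinv_l in HK; [lra|].
      specialize (upos N); lra. }
    lra.
Qed.
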